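(* Let $P$ be an Eulerian poset and $I\subset P$ a proper ideal. Then $\mathrm{Bier}(P,I)$ is an Eulerian poset.
   Context: A graded poset (bounded, all maximal chains of equal length) is Eulerian if every interval $[x,y]$ with $x<y$ contains equally many elements of odd rank and of even rank. A proper ideal $I$ of $P$ is a nonempty down-closed subset different from $P$. The Bier poset $\mathrm{Bier}(P,I)$ consists of all intervals $[x,y]$ of $P$ with $x\in I$, $y\notin I$, ordered by reversed inclusion ($[x',y']\le[x,y]$ iff $x'\le x<y\le y'$), together with an additional top element $\hat1$. *)

(* Defs.v *)
From HB Require Import structures.
From mathcomp Require Import all_boot all_order.
Set Implicit Arguments. Unset Strict Implicit. Unset Printing Implicit Defensive.
Import Order.TTheory.
Local Open Scope order_scope.

Section GenericPoset.
Variables (T : finType) (A : {set T}) (le : rel T).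

Definition is_poset : Prop :=
  [/\ {in A, forall x, le x x},
      {in A &, forall x y, le x y -> le y x -> x = y} &
      {in A & &, forall x y z, le x y -> le y z -> le x z}].

Definition lt_rel (x y : T) : bool := (x != y) && le x y.

Definition is_bounded : Prop :=
  exists2 b, b \in A & exists2 t, t \in A &
    {in A, forall z, le b z && le z t}.

Definition is_chain (C : {set T}) : bool :=
  (C \subset A) && [forall x in C, forall y in C, le x y || le y x].

Definition is_maximal_chain (C : {set T}) : bool :=
  is_chain C && [forall D : {set T}, is_chain D ==> (C \subset D) ==> (D == C)].

Definition is_graded : Prop :=
  forall C D : {set T}, is_maximal_chain C -> is_maximal_chain D -> #|C| = #|D|.

Definition rank (x : T) : nat :=
  (\max_(C : {set T} | is_chain C && [forall z in C, le z x]) #|C|).-1.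

Definition Eulerian : Prop :=
  [/\ is_poset, is_bounded, is_graded &
      {in A &, forall x y, lt_rel x y ->
         #|[set z in A | le x z && le z y && odd (rank z)]| =
         #|[set z in A | le x z && le z y && ~~ odd (rank z)]| }].

End GenericPoset.

Definition proper_ideal {d} {P : finPOrderType d} (I : {set P}) : Prop :=
  [/\ I != set0, I != setT & forall x y : P, y \in I -> x <= y -> x \in I].

(* Bier poset: the element [Some (x, y)] stands for the interval [x,y] and
   [None] for the adjoined top element 1^. *)
Definition Bier_carrier {d} {P : finPOrderType d} (I : {set P})
  : {set option (P * P)} :=
  [set u | if u is Some (x, y) then [&& x \in I, y \notin I & x <= y] else true].

Definition Bier_le {d} {P : finPOrderType d} (u v : option (P * P)) : bool :=
  match u, v with
  | _, None => true
  | None, Some _ => false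
  | Some (x', y'), Some (x, y) => (x' <= x) && (y <= y')
  end.

(* Main.v *)
Require Import Defs.
From HB Require Import structures.
From mathcomp Require Import all_boot all_order.
From mathcomp Require Import ssralg ssrnum ssrint zify.
Set Implicit Arguments. Unset Strict Implicit. Unset Printing Implicit Defensive.

Definition below (T : finType) (A : {set T}) (le : rel T) (z : T) (C : {set T}) :=
  is_chain A le C && [forall w in C, le w z].

Lemma chainP (T : finType) (A : {set T}) (le : rel T) (C : {set T}) :
  reflect (C \subset A /\ {in C &, forall x y, le x y || le y x}) (is_chain A le C).
Proof.
apply: (iffP andP) => [[sCA /forall_inP H]|[sCA H]]; split => //.
  by move=> x y xC yC; have /forall_inP := H x xC; apply.
by apply/forall_inP => x xC; apply/forall_inP => y yC; apply: H.
Qed.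

Lemma belowP (T : finType) (A : {set T}) (le : rel T) z (C : {set T}) :
  reflect (is_chain A le C /\ {in C, forall w, le w z}) (below A le z C).
Proof.
by apply: (iffP andP) => [[H /forall_inP K]|[H K]]; split => //; apply/forall_inP.
Qed.

Lemma rank_spec (T : finType) (A : {set T}) (le : rel T) z :
  is_poset A le -> z \in A ->
  exists2 L, below A le z L &
    #|L| = (rank A le z).+1 /\ forall C, below A le z C -> #|C| <= #|L|.
Proof.
move=> [refl _ _] zA.
have bz : below A le z [set z].
  apply/belowP; split; last by move=> w; rewrite inE => /eqP ->; apply: refl.
  apply/chainP; split; first by rewrite sub1set.
  by move=> x y; rewrite !inE => /eqP -> /eqP ->; rewrite refl.
have pos : 0 < #|[pred C | below A le z C]|.
  by apply/card_gt0P; exists [set z].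
have [L LP Lmax] := eq_bigmax_cond (fun C : {set T} => #|C|) pos.
exists L; first by [].
have le1 : 1 <= #|L|.
  rewrite -Lmax -(cards1 z).
  exact: (@leq_bigmax_cond _ (fun C => below A le z C) (fun C : {set T} => #|C|)).
split.
  suff -> : rank A le z = #|L|.-1 by rewrite prednK.
  by rewrite -Lmax.
move=> C bC; rewrite -Lmax.
exact: (@leq_bigmax_cond _ (fun C => below A le z C) (fun C : {set T} => #|C|)).
Qed.

Lemma chain_add (T : finType) (A : {set T}) (le : rel T) (C : {set T}) x :
  is_poset A le -> is_chain A le C -> x \in A ->
  {in C, forall c, le c x || le x c} -> is_chain A le (x |: C).
Proof.
move=> [refl _ _] /chainP [sCA HC] xA Hx; apply/chainP; split.
  by rewrite subUset sub1set xA.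
move=> u v; rewrite !inE => /orP[/eqP->|uC] /orP[/eqP->|vC].
- by rewrite refl.
- by rewrite orbC Hx.
- by rewrite Hx.
- exact: HC.
Qed.

Lemma rank_lt (T : finType) (A : {set T}) (le : rel T) x y :
  is_poset A le -> x \in A -> y \in A -> lt_rel le x y ->
  rank A le x < rank A le y.
Proof.
move=> po xA yA /andP[nxy lxy].
have [refl anti trans] := po.
have [Lx /belowP [cLx bLx] [cardx _]] := rank_spec po xA.
have [Ly _ [cardy maxy]] := rank_spec po yA.
have yLx : y \notin Lx.
  apply/negP => yL; have := bLx y yL => lyx.
  by move: nxy; rewrite (anti x y xA yA lxy lyx) eqxx.
have := maxy (y |: Lx).
rewrite cardsU1 yLx cardx cardy add1n ltnS; apply; apply/belowP; split.
  apply: chain_add => // c cL; apply/orP; left; apply: (trans c x y) => //.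
    by have /chainP [+ _] := cLx; move/subsetP; apply.
  exact: bLx.
move=> w; rewrite !inE => /orP[/eqP->|wL]; first exact: refl.
apply: (trans w x y) => //; last exact: bLx.
by have /chainP [+ _] := cLx; move/subsetP; apply.
Qed.

Lemma rank_bot (T : finType) (A : {set T}) (le : rel T) b :
  is_poset A le -> b \in A -> {in A, forall z, le b z} -> rank A le b = 0.
Proof.
move=> po bA bmin; have [refl anti trans] := po.
have [L /belowP [/chainP [sLA _] bL] [cardL _]] := rank_spec po bA.
suff : #|L| <= 1 by rewrite cardL ltnS leqn0 => /eqP.
have -> : L = [set b] :&: L.
  apply/setP => w; rewrite !inE; case wL: (w \in L); rewrite ?andbF ?andbT //.
  have wA : w \in A by apply: (subsetP sLA).
  by rewrite (anti w b wA bA (bL w wL) (bmin w wA)) eqxx.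
by rewrite -(cards1 b) subset_leq_card // subsetIl.
Qed.

Lemma below_top (T : finType) (A : {set T}) (le : rel T) z (L : {set T}) :
  is_poset A le -> z \in A -> below A le z L ->
  (forall C, below A le z C -> #|C| <= #|L|) -> z \in L.
Proof.
move=> po zA /belowP [cL bL] maxL; have [refl _ _] := po.
apply/negPn/negP => zL.
have bz : below A le z (z |: L).
  apply/belowP; split.
    by apply: chain_add => // c cL'; rewrite bL.
  by move=> w; rewrite !inE => /orP[/eqP->|/bL //]; apply: refl.
by have := maxL _ bz; rewrite cardsU1 zL add1n ltnn.
Qed.

Lemma below_eq (T : finType) (A : {set T}) (le : rel T) z (L C : {set T}) :
  (forall C, below A le z C -> #|C| <= #|L|) -> below A le z C ->
  L \subset C -> C = L.
Proof.
by move=> maxL bC sLC; apply/eqP; rewrite eq_sym eqEcard sLC maxL.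
Qed.

Lemma chain_sub (T : finType) (A : {set T}) (le : rel T) (C D : {set T}) :
  is_chain A le C -> D \subset C -> is_chain A le D.
Proof.
move=> /chainP [sCA HC] sDC; apply/chainP; split; first exact: subset_trans sDC sCA.
by move=> u v uD vD; apply: HC; apply: (subsetP sDC).
Qed.

Lemma max_chain_ext (T : finType) (A : {set T}) (le : rel T) (C : {set T}) :
  is_chain A le C -> exists2 E, is_maximal_chain A le E & C \subset E.
Proof.
move=> cC.
have pos : 0 < #|[pred D | is_chain A le D && (C \subset D)]|.
  by apply/card_gt0P; exists C; rewrite inE cC subxx.
have [E /andP [cE sCE] Emax] := eq_bigmax_cond (fun D : {set T} => #|D|) pos.
exists E => //; apply/andP; split => //.
apply/forallP => D; apply/implyP => cD; apply/implyP => sED.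
rewrite eq_sym eqEcard sED /= -Emax.
apply: (@leq_bigmax_cond _ (fun D => is_chain A le D && (C \subset D)) (fun D : {set T} => #|D|)).
by rewrite cD (subset_trans sCE sED).
Qed.

Lemma maxchainP (T : finType) (A : {set T}) (le : rel T) (E : {set T}) :
  reflect (is_chain A le E /\ forall D, is_chain A le D -> E \subset D -> D = E)
    (is_maximal_chain A le E).
Proof.
apply: (iffP andP) => [[cE /forallP H]|[cE H]]; split => //.
  by move=> D cD sED; have := H D; rewrite cD sED /= => /eqP.
by apply/forallP => D; apply/implyP => cD; apply/implyP => sED; rewrite (H D cD sED).
Qed.

Lemma rank_cover (T : finType) (A : {set T}) (le : rel T) x y :
  is_poset A le -> is_graded A le -> x \in A -> y \in A -> lt_rel le x y ->
  (forall z, z \in A -> le x z -> le z y -> z = x \/ z = y) ->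
  rank A le y = (rank A le x).+1.
Proof.
move=> po gr xA yA /andP[nxy lxy] cov.
have [refl anti trans] := po.
have [Lx bLx [cardx maxx]] := rank_spec po xA.
have [Ly bLy [cardy maxy]] := rank_spec po yA.
have xLx := below_top po xA bLx maxx.
have yLy := below_top po yA bLy maxy.
have /belowP [cLx lLx] := bLx.
have /belowP [cLy lLy] := bLy.
have /chainP [sLxA _] := cLx.
have /chainP [sLyA _] := cLy.
have [E mE sLyE] := max_chain_ext cLy.
have /maxchainP [cE maxE] := mE.
have /chainP [sEA HE] := cE.
have yE : y \in E by apply: (subsetP sLyE).
set B := [set e | le e y].
have EB : E :&: B = Ly.
  apply: (below_eq maxy).
    apply/belowP; split; first by apply: chain_sub cE _; apply: subsetIl.
    by move=> w; rewrite !inE => /andP[].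
  rewrite subsetI sLyE; apply/subsetP => w wL; rewrite inE; exact: lLy.
set U := E :\: B.
have cardE : #|E| = #|Ly| + #|U| by rewrite -EB cardsID.
have Uy : forall u, u \in U -> le y u.
  move=> u; rewrite !inE => /andP[nuy uE].
  by have := HE u y uE yE; rewrite (negbTE nuy).
have UE : U \subset E by apply: subsetDl.
have Lxy : forall c, c \in Lx -> le c y.
  move=> c cL; apply: (trans c x y) => //; [exact: (subsetP sLxA) | exact: lLx].
have yLxU : y \notin Lx :|: U.
  apply/negP; rewrite !inE => /orP[yL|/andP[nyy _]]; last by rewrite refl in nyy.
  have := lLx y yL => lyx.
  by move: nxy; rewrite (anti x y xA yA lxy lyx) eqxx.
have disj : [disjoint Lx & U].
  rewrite -setI_eq0; apply/eqP/setP => w; rewrite !inE.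
  by apply/negP => /and3P[wL /negP nwy _]; apply: nwy; apply: Lxy.
set E' := y |: (Lx :|: U).
have cardE' : #|E'| = (#|Lx| + #|U|).+1.
  rewrite cardsU1 yLxU add1n cardsU; move: disj; rewrite -setI_eq0 => /eqP ->.
  by rewrite cards0 subn0.
have cE' : is_chain A le E'.
  apply: chain_add => //.
    apply/chainP; split.
      by rewrite subUset sLxA (subset_trans UE sEA).
    move=> u v; rewrite !in_setU => /orP[uL|uU] /orP[vL|vU].
    - by have /chainP [_ ] := cLx; apply.
    - apply/orP; left; apply: (trans u y v) => //.
        exact: (subsetP sLxA).
        by apply: (subsetP sEA); apply: (subsetP UE).
        exact: Lxy.
      exact: Uy.
    - apply/orP; right; apply: (trans v y u) => //.
        exact: (subsetP sLxA).
        by apply: (subsetP sEA); apply: (subsetP UE).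
        exact: Lxy.
      exact: Uy.
    - by apply: HE; apply: (subsetP UE).
  by move=> c; rewrite !in_setU => /orP[/Lxy -> //|/Uy ->]; rewrite orbT.
have mE' : is_maximal_chain A le E'.
  apply/maxchainP; split => // D cD sE'D.
  apply/eqP; rewrite eqEsubset sE'D andbT; apply/subsetP => f fD.
  have /chainP [sDA HD] := cD.
  have fA : f \in A by apply: (subsetP sDA).
  have yD : y \in D by apply: (subsetP sE'D); rewrite !inE eqxx.
  have xD : x \in D by apply: (subsetP sE'D); rewrite !inE xLx orbT.
  case lfy : (le f y).
    have := HD f x fD xD; case/orP => [lfx|lxf].
      have bf : below A le x (f |: Lx).
        apply/belowP; split.
          apply: chain_add => // c cL; apply: HD => //.
          by apply: (subsetP sE'D); rewrite !inE cL orbT.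
        by move=> w; rewrite !inE => /orP[/eqP->|/lLx].
      have := below_eq maxx bf (subsetUr _ _) => eqf.
      by rewrite !inE -eqf !inE eqxx /= orbT.
    have [->|->] := cov f fA lxf lfy; first by rewrite !inE xLx orbT.
    by rewrite !inE eqxx.
  have lyf : le y f by have := HD f y fD yD; rewrite lfy.
  have cfE : is_chain A le (f |: E).
    apply: chain_add => // e eE.
    case ley : (le e y).
      by rewrite (trans e y f) //; apply: (subsetP sEA).
    apply: HD => //; apply: (subsetP sE'D).
    by rewrite !inE eE ley /= !orbT.
  have := maxE _ cfE (subsetUr _ _) => eqf.
  have fE : f \in E by rewrite -eqf !inE eqxx.
  by rewrite !inE fE lfy /= !orbT.
have := gr _ _ mE' mE; rewrite cardE' cardE => /eqP.
rewrite -addSn eqn_add2r => /eqP.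
by rewrite cardx cardy => -[->].
Qed.

Lemma card_bound (T : finType) (C : {set T}) (r : T -> nat) n :
  {in C &, injective r} -> {in C, forall c, r c <= n} -> #|C| <= n.+1.
Proof.
move=> inj bnd.
have inj' : {in C &, injective (fun c => (inord (r c) : 'I_n.+1))}.
  move=> u v uC vC /(congr1 val); rewrite /= !inordK ?ltnS ?bnd //.
  exact: inj.
rewrite -(card_in_imset inj'); apply: leq_trans (max_card _) _.
by rewrite card_ord.
Qed.

Lemma card_exact (T : finType) (C : {set T}) (r : T -> nat) n :
  {in C &, injective r} -> {in C, forall c, r c <= n} ->
  (forall k, k <= n -> exists2 c, c \in C & r c = k) -> #|C| = n.+1.
Proof.
move=> inj bnd surj.
have inj' : {in C &, injective (fun c => (inord (r c) : 'I_n.+1))}.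
  move=> u v uC vC /(congr1 val); rewrite /= !inordK ?ltnS ?bnd //.
  exact: inj.
rewrite -(card_in_imset inj'); apply/eqP; rewrite eqn_leq; apply/andP; split.
  by apply: leq_trans (max_card _) _; rewrite card_ord.
rewrite -{1}(card_ord n.+1); apply: subset_leq_card; apply/subsetP => i _.
apply/imsetP.
have [c cC rc] := surj i (ltn_ord i).
by exists c => //; apply: val_inj; rewrite /= inordK rc.
Qed.

Lemma rank_char (T : finType) (A : {set T}) (le : rel T) (r : T -> nat) b t :
  is_poset A le -> b \in A -> t \in A -> {in A, forall z, le b z && le z t} ->
  r b = 0 ->
  {in A &, forall x y, lt_rel le x y -> r x < r y} ->
  {in A &, forall x y, lt_rel le x y -> (r x).+1 < r y ->
     exists2 z, z \in A & lt_rel le x z && lt_rel le z y} ->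
  {in A, forall z, rank A le z = r z} /\ is_graded A le.
Proof.
move=> po bA tA bt rb rmono rgap.
have [refl anti trans] := po.
have rle : {in A &, forall x y, le x y -> r x <= r y}.
  move=> x y xA yA lxy; case: (eqVneq x y) => [->//|nxy].
  by apply: ltnW; apply: rmono => //; rewrite /lt_rel nxy.
have rinj : forall C, is_chain A le C -> {in C &, injective r}.
  move=> C /chainP [sCA HC] u v uC vC ruv.
  have uA := subsetP sCA u uC; have vA := subsetP sCA v vC.
  apply/eqP/negPn/negP => nuv.
  case/orP: (HC u v uC vC) => [luv|lvu].
    by have := rmono u v uA vA; rewrite /lt_rel nuv luv ruv ltnn => /(_ isT).
  by have := rmono v u vA uA; rewrite /lt_rel eq_sym nuv lvu ruv ltnn => /(_ isT).
have upper : forall z C, z \in A -> below A le z C -> #|C| <= (r z).+1.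
  move=> z C zA /belowP [cC bC]; apply: card_bound; first exact: rinj.
  have /chainP [sCA _] := cC.
  by move=> c cC'; apply: rle => //; [exact: (subsetP sCA) | exact: bC].
have lower : forall n y, y \in A -> r y = n ->
    exists2 C, below A le y C & #|C| = n.+1.
  elim=> [|m IH] y yA ry.
    exists [set y]; last by rewrite cards1.
    apply/belowP; split; last by move=> w; rewrite inE => /eqP ->; apply: refl.
    apply/chainP; split; first by rewrite sub1set.
    by move=> u v; rewrite !inE => /eqP -> /eqP ->; rewrite refl.
  have nby : b != y by apply/eqP => eby; move: ry; rewrite -eby rb.
  have lby : lt_rel le b y by rewrite /lt_rel nby; have /andP[] := bt y yA.
  pose Q := fun z => (z \in A) && lt_rel le z y.
  have Qb : Q b by rewrite /Q bA.
  case: (arg_maxnP r Qb) => z /andP [zA lzy] zmax.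
  have rzy := rmono z y zA yA lzy.
  have rz : r z = m.
    apply/eqP; rewrite eqn_leq -ltnS -ry rzy /= leqNgt; apply/negP => gap0.
    have gap : (r z).+1 < r y by rewrite ry ltnS.
    have [w wA /andP [lzw lwy]] := rgap z y zA yA lzy gap.
    have := zmax w; rewrite /Q wA lwy => /(_ isT) H.
    by have := rmono z w zA wA lzw; rewrite ltnNge => /negP; apply.
  have [Cz /belowP [cCz bCz] cardz] := IH z zA rz.
  have /chainP [sCzA _] := cCz.
  have /andP [nzy lzy'] := lzy.
  have ltcy : forall c, c \in Cz -> le c y.
    by move=> c cC; apply: (trans c z y) => //; [exact: (subsetP sCzA) | exact: bCz].
  have yCz : y \notin Cz.
    apply/negP => yC; have lyz := bCz y yC.
    by move: nzy; rewrite (anti z y zA yA lzy' lyz) eqxx.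
  exists (y |: Cz); last by rewrite cardsU1 yCz cardz.
  apply/belowP; split.
    by apply: chain_add => // c cC; rewrite ltcy.
  by move=> w; rewrite !inE => /orP[/eqP->|/ltcy //]; apply: refl.
split.
  move=> z zA; have [L bL [cardL maxL]] := rank_spec po zA.
  have [C bC cardC] := lower _ z zA erefl.
  apply/eqP; rewrite eqn_leq -ltnS -cardL upper //= -ltnS -cardC -cardL.
  exact: maxL.
suff H : forall C, is_maximal_chain A le C -> #|C| = (r t).+1.
  by move=> C D mC mD; rewrite !H.
move=> C /maxchainP [cC maxC].
have /chainP [sCA HC] := cC.
have inC : forall x, x \in A -> {in C, forall c, le c x || le x c} -> x \in C.
  move=> x xA H; have cxC := chain_add po cC xA H.
  by rewrite -(maxC _ cxC (subsetUr _ _)) !inE eqxx.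
have bC : b \in C.
  by apply: inC => // c cC'; have /andP[-> _] := bt c (subsetP sCA c cC'); rewrite orbT.
have tC : t \in C.
  by apply: inC => // c cC'; have /andP[_ ->] := bt c (subsetP sCA c cC').
apply: card_exact; first exact: rinj.
  move=> c cC'; apply: rle => //; first exact: (subsetP sCA).
  by have /andP[] := bt c (subsetP sCA c cC').
move=> k kt.
case: (boolP [exists c in C, r c == k]) => [/existsP [c /andP [cC' /eqP rc]]|nk].
  by exists c.
exfalso.
have nk' : forall c, c \in C -> r c != k.
  by move=> c cC'; apply/negP => rck; apply: (negP nk); apply/existsP; exists c; rewrite cC'.
have k0 : 0 < k by rewrite lt0n; apply/negP => /eqP k0; move: (nk' b bC); rewrite rb k0 eqxx.
have kt' : k < r t by rewrite ltn_neqAle kt andbT eq_sym nk'.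
pose QL := fun c => (c \in C) && (r c < k).
pose QU := fun c => (c \in C) && (k < r c).
have QLb : QL b by rewrite /QL bC rb.
have QUt : QU t by rewrite /QU tC.
case: (arg_maxnP r QLb) => l /andP [lC rlk] lmax.
case: (arg_minnP r QUt) => u /andP [uC rku] umin.
have lA := subsetP sCA l lC; have uA := subsetP sCA u uC.
have llu : le l u.
  case/orP: (HC l u lC uC) => // lul.
  case: (eqVneq u l) => [eul|nul]; first by move: rlk; rewrite -eul ltnNge ltnW.
  have := rmono u l uA lA; rewrite /lt_rel nul lul => /(_ isT) rul.
  by move: (ltn_trans rlk rku); rewrite ltnNge ltnW.
have nlu : l != u by apply/eqP => elu; move: (ltn_trans rlk rku); rewrite elu ltnn.
have ltlu : lt_rel le l u by rewrite /lt_rel nlu llu.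
have gap : (r l).+1 < r u.
  apply: (@leq_ltn_trans k) => //.
have [w wA /andP [/andP [nlw llw] /andP [nwu lwu]]] := rgap l u lA uA ltlu gap.
have rlw : r l < r w by apply: rmono => //; rewrite /lt_rel nlw llw.
have rwu : r w < r u by apply: rmono => //; rewrite /lt_rel nwu lwu.
have wC : w \in C.
  apply: inC => // c cC'.
  have cA := subsetP sCA c cC'.
  case: (ltngtP (r c) k) => [rck|rkc|rck]; last by move: (nk' c cC'); rewrite rck eqxx.
    have rcl : r c <= r l by apply: lmax; rewrite /QL cC' rck.
    have lcl : le c l.
      case/orP: (HC c l cC' lC) => // llc.
      case: (eqVneq l c) => [->|nlc]; first exact: refl.
      by have := rmono l c lA cA; rewrite /lt_rel nlc llc => /(_ isT); rewrite ltnNge rcl.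
    by rewrite (trans c l w).
  have rcu : r u <= r c by apply: umin; rewrite /QU cC' rkc.
  have luc : le u c.
    case/orP: (HC u c uC cC') => // lcu.
    case: (eqVneq c u) => [->|ncu]; first exact: refl.
    by have := rmono c u cA uA; rewrite /lt_rel ncu lcu => /(_ isT); rewrite ltnNge rcu.
  by rewrite (trans w u c) ?orbT.
case: (ltngtP (r w) k) => [rwk|rkw|rwk]; last by move: (nk' w wC); rewrite rwk eqxx.
  have := lmax w; rewrite /QL wC rwk => /(_ isT) H.
  by move: rlw; rewrite ltnNge => /negP; apply.
have := umin w; rewrite /QU wC rkw => /(_ isT) H.
by move: rwu; rewrite ltnNge => /negP; apply.
Qed.
Import Order.TTheory GRing.Theory Num.Theory.

Definition sg (k : nat) : int := ((-1) ^+ k)%R.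

Lemma sgD m k : sg (m + k) = (sg m * sg k)%R.
Proof. by rewrite /sg exprD. Qed.

Lemma sg_sq k : (sg k * sg k = 1)%R.
Proof. by rewrite /sg -exprD addnn -mul2n exprM sqrrN expr1n. Qed.

Lemma sgB n k : k <= n -> sg (n - k) = (sg n * sg k)%R.
Proof.
move=> kn; rewrite -{2}(subnK kn) sgD -mulrA.
by rewrite sg_sq mulr1.
Qed.



Lemma count_sign (T : finType) (A : {set T}) (Q : pred T) (f : T -> nat) :
  (\sum_(z | (z \in A) && Q z) sg (f z))%R =
  (#|[set z in A | Q z && ~~ odd (f z)]|%:R - #|[set z in A | Q z && odd (f z)]|%:R)%R.
Proof.
rewrite (bigID (fun z => odd (f z))) /= addrC.
congr (_ + _)%R.
  rewrite -sumr_const; apply: eq_big => [z|z /andP[_ oz]]; first by rewrite !inE andbA.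
  by rewrite /sg -signr_odd (negbTE oz).
transitivity (\sum_(z in [set z in A | Q z && odd (f z)]) (-1 : int))%R.
  apply: eq_big => [z|z /andP[_ oz]]; first by rewrite !inE andbA.
  by rewrite /sg -signr_odd oz.
by rewrite sumr_const mulNrn.
Qed.

Lemma count_signE (T : finType) (A : {set T}) (Q : pred T) (f : T -> nat) :
  ((\sum_(z | (z \in A) && Q z) sg (f z))%R == 0%R) =
  (#|[set z in A | Q z && odd (f z)]| == #|[set z in A | Q z && ~~ odd (f z)]|).
Proof. by rewrite count_sign subr_eq0 eqr_nat eq_sym. Qed.

Lemma sum_option (X : finType) (p : pred (option X)) (F : option X -> int) :
  (\sum_(w | p w) F w = (if p None then F None else 0) + \sum_(q | p (Some q)) F (Some q))%R.
Proof.
rewrite big_mkcond (bigD1 None) //=; congr (_ + _)%R.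
rewrite (reindex_omap Some id) => [|[x|] //].
rewrite [RHS]big_mkcond; apply: eq_bigl => x /=.
by rewrite eqxx.
Qed.

Local Open Scope order_scope.

Definition rB d (P : finPOrderType d) (rho : P -> nat) (n : nat) (w : option (P * P)) : nat :=
  if w is Some (a, c) then rho a + (n - rho c) else n.

Lemma bier_sum_some d (P : finPOrderType d) (I : {set P}) (rho : P -> nat) (n : nat) :
  (forall x y : P, y \in I -> x <= y -> x \in I) ->
  (forall x y : P, (\sum_(z : P | (x <= z)%O && (z <= y)%O) sg (rho z))%R =
                   if x == y then sg (rho x) else 0%R) ->
  (forall z, rho z <= n)%N ->
  forall x' y' x y : P,
  Some (x', y') \in Bier_carrier I -> Some (x, y) \in Bier_carrier I ->
  Bier_le (Some (x', y')) (Some (x, y)) -> Some (x', y') != Some (x, y) ->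
  (\sum_(w | (w \in Bier_carrier I) &&
        (Bier_le (Some (x', y')) w && Bier_le w (Some (x, y)))) sg (rB rho n w))%R = 0%R.
Proof.
move=> hI hs hn x' y' x y; rewrite !inE => /and3P[x'I y'I lx'y'] /and3P[xI yI lxy].
move=> /andP[lx'x lyy'] neq.
rewrite sum_option /= andbF add0r.
transitivity (\sum_(a : P | (x' <= a)%O && (a <= x)%O)
                \sum_(c : P | (y <= c)%O && (c <= y')%O) (sg (rho a) * sg n * sg (rho c)))%R.
  rewrite pair_big_dep; apply: eq_big => [[a c]|[a c] _] /=.
    rewrite inE; apply/idP/idP.
      by move=> /andP[/and3P[aI cI lac] /andP[/andP[-> ->] /andP[-> ->]]].
    move=> /andP[/andP[lx'a lax] /andP[lyc lcy']].
    rewrite lx'a lax lyc lcy' !andbT (hI a x xI lax) /=.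
    apply/andP; split; last exact: (le_trans lax (le_trans lxy lyc)).
    by apply/negP => cI; move/negP: yI; apply; apply: hI cI lyc.
  by rewrite sgD sgB // mulrA.
transitivity ((\sum_(a : P | (x' <= a)%O && (a <= x)%O) sg (rho a)) * sg n *
              (\sum_(c : P | (y <= c)%O && (c <= y')%O) sg (rho c)))%R.
  rewrite big_distrl /= big_distrl /=; apply: eq_bigr => a _.
  by rewrite big_distrr.
rewrite !hs; case: (eqVneq x' x) => [ex|nx]; last by rewrite !mul0r.
case: (eqVneq y y') => [ey|ny]; last by rewrite mulr0.
by move: neq; rewrite ex ey eqxx.
Qed.

Lemma bier_sum_top d (P : finPOrderType d) (I : {set P}) (rho : P -> nat) (n : nat) :
  (forall x y : P, y \in I -> x <= y -> x \in I) ->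
  (forall x y : P, (\sum_(z : P | (x <= z)%O && (z <= y)%O) sg (rho z))%R =
                   if x == y then sg (rho x) else 0%R) ->
  (forall z, rho z <= n)%N ->
  forall x' y' : P,
  Some (x', y') \in Bier_carrier I ->
  (\sum_(w | (w \in Bier_carrier I) &&
        (Bier_le (Some (x', y')) w && Bier_le w None)) sg (rB rho n w))%R = 0%R.
Proof.
move=> hI hs hn x' y'; rewrite inE => /and3P[x'I y'I lx'y'].
have NC : None \in Bier_carrier I by rewrite inE.
rewrite sum_option /= NC /=.
pose T := (\sum_(a : P | (a \in I) && (x' <= a)%O)
             \sum_(c : P | ((c \notin I) && (a <= c)%O) && (c <= y')%O)
               (sg (rho a) * sg (rho c)))%R.
transitivity (sg n + sg n * T)%R.
  congr (_ + _)%R; rewrite /T pair_big_dep big_distrr /=.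
  apply: eq_big => [[a c]|[a c] _] /=.
    rewrite inE andbT -!andbA.
    by case: (a \in I); case: (c \in I); case: (a <= c)%O; case: (x' <= a)%O.
  by rewrite sgD sgB // mulrCA.
suff -> : T = (-1)%R by rewrite mulrN1 subrr.
have inner : forall a, a \in I ->
    (\sum_(c : P | ((c \notin I) && (a <= c)%O) && (c <= y')%O) sg (rho c) =
     - \sum_(c : P | ((c \in I) && (a <= c)%O) && (c <= y')%O) sg (rho c))%R.
  move=> a aI; apply/eqP; rewrite -addr_eq0.
  have H := hs a y'; rewrite (bigID (fun c => c \in I)) /= in H.
  have ay : (a == y') = false.
    by apply/negP => /eqP eay; move: y'I; rewrite -eay aI.
  rewrite ay in H.
  apply/eqP; rewrite -[RHS]H addrC; congr (_ + _)%R; apply: eq_bigl => c;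
    by rewrite -!andbA andbC -!andbA.
transitivity (- \sum_(a : P | (a \in I) && (x' <= a)%O)
                \sum_(c : P | ((c \in I) && (a <= c)%O) && (c <= y')%O)
                  (sg (rho a) * sg (rho c)))%R.
  rewrite /T -sumrN; apply: eq_bigr => a /andP[aI _].
  by rewrite -!big_distrr /= inner // mulrN.
rewrite (exchange_big_dep (fun c => (c \in I) && (c <= y')%O)) /=; last first.
  by move=> a c _ /andP[/andP[-> _] ->].
transitivity (- \sum_(c : P | (c \in I) && (c <= y')%O)
                 ((if x' == c then sg (rho x') else 0) * sg (rho c)))%R.
  congr (- _)%R; apply: eq_bigr => c /andP[cI lcy].
  rewrite -hs big_distrl /=; apply: eq_bigl => a.
  rewrite cI lcy !andbT andbC; case lac: (a <= c)%O; rewrite ?andbF //=.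
  by rewrite (hI a c cI lac) andbT.
rewrite (bigD1 x') /=; last by rewrite x'I.
rewrite eqxx big1 ?addr0 ?sg_sq //.
by move=> c /andP[_ ncx]; rewrite eq_sym (negbTE ncx) mul0r.
Qed.

Lemma arith1 a a' b b' n : (a' <= a -> b <= b' -> b' <= n -> (a' < a) || (b < b') ->
  a' + (n - b') < a + (n - b))%N.
Proof. move=> ? ? ? /orP[?|?]; lia. Qed.

Lemma arith2 a c n : (a < c -> c <= n -> a + (n - c) < n)%N.
Proof. lia. Qed.

Lemma arith3 a b b' n : (b <= b' -> b' <= n -> b' <= b.+1 ->
  (a + (n - b')).+1 < a + (n - b) -> False)%N.
Proof. lia. Qed.

Lemma arith4 a a' b n : (a <= a'.+1 -> (a' + (n - b)).+1 < a + (n - b) -> False)%N.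
Proof. lia. Qed.

Lemma arith5 a c n : ((a + (n - c)).+1 < n -> c <= n -> a.+1 < c)%N.
Proof. lia. Qed.

Lemma some_neq1 (X : eqType) (a a' c c' : X) : a != a' -> Some (a, c) != Some (a', c').
Proof. by apply: contraNneq => -[->]. Qed.

Lemma some_neq2 (X : eqType) (a a' c c' : X) : c != c' -> Some (a, c) != Some (a', c').
Proof. by apply: contraNneq => -[_ ->]. Qed.

Lemma bier_poset d (P : finPOrderType d) (I : {set P}) :
  is_poset (Bier_carrier I) (@Bier_le d P).
Proof.
split.
- by move=> [[a c]|] _ //=; rewrite !le_refl.
- move=> [[a c]|] [[a' c']|] _ _ //= /andP[l1 l2] /andP[l3 l4].
  have -> : a = a' by apply/le_anti; rewrite l1 l3.
  by have -> : c = c' by apply/le_anti; rewrite l2 l4.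
- move=> [[a c]|] [[a' c']|] [[a'' c'']|] _ _ _ //= /andP[l1 l2] /andP[l3 l4].
  by rewrite (le_trans l1 l3) (le_trans l4 l2).
Qed.

Theorem theorem6 (d : Order.disp_t) (P : finPOrderType d) (I : {set P}) :
  Eulerian [set: P] (<=%O : rel P) ->
  proper_ideal I ->
  Eulerian (Bier_carrier I) (@Bier_le d P).
Proof.
move=> [poP [b0 _ [t0 _ bt]] grP euP] [I0 IT hI].
set rho := rank [set: P] (<=%O : rel P).
set n := rho t0.
have bt' : forall z : P, (b0 <= z) && (z <= t0) by move=> z; apply: bt; rewrite inE.
have rho_lt : forall x y : P, x < y -> (rho x < rho y)%N.
  move=> x y lxy; apply: rank_lt => //; rewrite ?inE //.
  by rewrite /lt_rel -lt_neqAle.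
have rho_le : forall x y : P, x <= y -> (rho x <= rho y)%N.
  move=> x y; rewrite le_eqVlt => /orP[/eqP->//|/rho_lt]; exact: ltnW.
have rho_gap : forall x y : P, x < y -> ((rho x).+1 < rho y)%N ->
    exists2 z, x < z & z < y.
  move=> x y lxy gap.
  case: (boolP [exists z, (x < z) && (z < y)]) => [/existsP [z /andP[h1 h2]]|ne].
    by exists z.
  exfalso; suff : rho y = (rho x).+1 by move=> e; move: gap; rewrite e ltnn.
  apply: rank_cover => //; rewrite ?inE //; first by rewrite /lt_rel -lt_neqAle.
  move=> z _ lxz lzy.
  case: (eqVneq z x) => [->|nzx]; first by left.
  case: (eqVneq z y) => [->|nzy]; first by right.
  exfalso; move/existsP: ne; apply; exists z.
  by rewrite !lt_neqAle eq_sym nzx lxz nzy lzy.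
have rb0 : rho b0 = 0%N.
  apply: rank_bot => //; try by rewrite inE.
  by move=> z _; have /andP[] := bt' z.
have hn : forall z, (rho z <= n)%N by move=> z; apply: rho_le; have /andP[] := bt' z.
have hs : forall x y : P, (\sum_(z : P | (x <= z)%O && (z <= y)%O) sg (rho z))%R =
                   if x == y then sg (rho x) else 0%R.
  move=> x y; case: (eqVneq x y) => [<-|nxy].
    apply: big_pred1 => z /=; rewrite eq_sym.
    by apply/andP/eqP => [[h1 h2]|->]; [apply: le_anti; rewrite h1 h2|rewrite le_refl].
  case lxy : (x <= y).
    have := euP x y; rewrite !inE /lt_rel nxy lxy => /(_ isT isT isT) /eqP.
    rewrite -count_signE => /eqP H; rewrite -[RHS]H; apply: eq_bigl => z; by rewrite inE.
  apply: big_pred0 => z; apply/negP => /andP[h1 h2].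
  by move: lxy; rewrite (le_trans h1 h2).
have nE : n = rho t0 by [].
clearbody n; clearbody rho.
have b0I : b0 \in I.
  have [x xI] := set0Pn _ I0; apply: hI xI _; by have /andP[] := bt' x.
have t0I : t0 \notin I.
  apply/negP => tI; move/eqP: IT; apply; apply/setP => z; rewrite inE.
  by apply: hI tI _; have /andP[] := bt' z.
have poB := bier_poset I.
have bA : Some (b0, t0) \in Bier_carrier I.
  by rewrite inE b0I t0I /=; have /andP[] := bt' t0.
have NA : None \in Bier_carrier I by rewrite inE.
have btB : {in Bier_carrier I, forall z, Bier_le (Some (b0, t0)) z && Bier_le z None}.
  by move=> [[a c]|] _ //=; have /andP[-> _] := bt' a; have /andP[_ ->] := bt' c.
have rbB : rB rho n (Some (b0, t0)) = 0%N by rewrite /= rb0 nE subnn.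
have monoB : {in Bier_carrier I &, forall u v, lt_rel (@Bier_le d P) u v ->
                 (rB rho n u < rB rho n v)%N}.
  move=> [[x' y']|] [[x y]|] //; rewrite !inE /lt_rel /=.
  - move=> /and3P[_ _ lx'y'] _ /andP[neq /andP[lx'x lyy']].
    have h1 := rho_le _ _ lx'x; have h2 := rho_le _ _ lyy'; have h3 := hn y'; have h4 := hn y.
    case: (eqVneq x' x) => [ex|nx].
      case: (eqVneq y y') => [ey|ny]; first by move: neq; rewrite ex ey eqxx.
      have : y < y' by rewrite lt_neqAle ny lyy'.
      by move/rho_lt => lt; apply: (arith1 h1 h2 h3); rewrite lt orbT.
    have : x' < x by rewrite lt_neqAle nx lx'x.
    by move/rho_lt => lt; apply: (arith1 h1 h2 h3); rewrite lt.
  - move=> /and3P[x'I y'I lx'y'] _ _.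
    have : x' < y'.
      rewrite lt_neqAle lx'y' andbT; apply/eqP => e; by move: y'I; rewrite -e x'I.
    by move/rho_lt => lt; apply: arith2 => //; apply: hn.
have gapB : {in Bier_carrier I &, forall u v, lt_rel (@Bier_le d P) u v ->
               ((rB rho n u).+1 < rB rho n v)%N ->
               exists2 w, w \in Bier_carrier I &
                 lt_rel (@Bier_le d P) u w && lt_rel (@Bier_le d P) w v}.
  move=> [[x' y']|] [[x y]|] //; rewrite /lt_rel.
  - rewrite !inE => /and3P[x'I y'I lx'y'] /and3P[xI yI lxy] /andP[neq /andP[lx'x lyy']] /= gap.
    have h1 := rho_le _ _ lx'x; have h2 := rho_le _ _ lyy'; have h3 := hn y'; have h4 := hn y.
    case: (ltnP (rho x').+1 (rho x)) => g1.
      have lt1 : x' < x.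
        by rewrite lt_neqAle lx'x andbT; apply/eqP => e; move: g1; rewrite e ltnNge leqnSn.
      have [z lx'z lzx] := rho_gap _ _ lt1 g1.
      exists (Some (z, y')).
        rewrite inE (hI z x xI (ltW lzx)) y'I /=.
        exact: le_trans (ltW lzx) (le_trans lxy lyy').
      rewrite /= !le_refl (ltW lx'z) (ltW lzx) lyy' !andbT.
      by apply/andP; split; apply: some_neq1; rewrite ?(lt_eqF lx'z) ?(lt_eqF lzx).
    case: (ltnP (rho y).+1 (rho y')) => g2.
      have lt2 : y < y'.
        by rewrite lt_neqAle lyy' andbT; apply/eqP => e; move: g2; rewrite e ltnNge leqnSn.
      have [z lyz lzy'] := rho_gap _ _ lt2 g2.
      exists (Some (x, z)).
        rewrite inE xI /= (le_trans lxy (ltW lyz)) andbT.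
        by apply/negP => zI; move: yI; rewrite (hI y z zI (ltW lyz)).
      rewrite /= !le_refl lx'x (ltW lyz) (ltW lzy') /= !andbT.
      by apply/andP; split; apply: some_neq2; rewrite eq_sym ?(lt_eqF lzy') ?(lt_eqF lyz).
    have nx : x' != x by apply/eqP => e; move: gap; rewrite e; apply: arith3.
    have ny : y != y' by apply/eqP => e; move: gap; rewrite e; apply: arith4.
    exists (Some (x, y')).
      by rewrite inE xI y'I /= (le_trans lxy lyy').
    rewrite /= !le_refl lx'x lyy' /= !andbT.
    by apply/andP; split; [apply: some_neq1 | apply: some_neq2; rewrite eq_sym].
  - move: x' y' => a c; rewrite !inE => /and3P[aI cI lac] _ _ /= gap.
    have hac : (rho a).+1 < rho c by apply: arith5 gap (hn c).
    have lt : a < c.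
      rewrite lt_neqAle lac andbT; apply/eqP => e; by move: cI; rewrite -e aI.
    have [z laz lzc] := rho_gap _ _ lt hac.
    case zI : (z \in I).
      exists (Some (z, c)); first by rewrite inE zI cI (ltW lzc).
      rewrite /= (ltW laz) le_refl !andbT /=.
      by apply: some_neq1; rewrite (lt_eqF laz).
    exists (Some (a, z)); first by rewrite inE aI zI (ltW laz).
    rewrite /= (ltW lzc) le_refl !andbT /=.
    by apply: some_neq2; rewrite eq_sym (lt_eqF lzc).
have [rankE grB] := rank_char poB bA NA btB rbB monoB gapB.
split => //.
  by exists (Some (b0, t0)) => //; exists None.
move=> u v uA vA luv.
apply/eqP; rewrite -count_signE.
rewrite (eq_bigr (fun z => sg (rB rho n z))); last first.
  by move=> z /andP[zA _]; rewrite rankE.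
move: uA vA luv; case: u => [[x' y']|]; case: v => [[x y]|] //.
- move=> uA vA /andP[neq le]; apply/eqP.
  by apply: (bier_sum_some hI hs hn).
- by move=> uA _ _; apply/eqP; apply: (bier_sum_top hI hs hn).
Qed.
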